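(* Let $d\ge 2$ be an integer, $D\in\{d,-d\}$, and let $a_1,\dots,a_d$ be integers forming a complete system of residues modulo $d$, so that $S=\{a_i \bmod D : 1\le i\le d\}$ is an exact covering system. Then every integer $n$ can be expressed as $n=\sum_{j=0}^k b_jD^j$ with $b_j\in\{a_1,\dots,a_d\}$ for some $k\in\mathbb{N}$ if and only if $G_S$ is (weakly) connected and its unique directed cycle contains $0$. Moreover, in that case the representation is unique up to leading copies of the block of digits of the cycle: if the cycle is $0=c_0\to c_1\to\cdots\to c_L=0$ with $c_t=Dc_{t-1}+e_t$, $e_t\in\{a_1,\dots,a_d\}$, then any two representations $\sum_{j=0}^k b_jD^j$ of the same integer $n$ differ only in that one is obtained from the other by prepending, in the most significant positions, some number of copies of the digit string $e_1e_2\cdots e_L$ (written most significant digit first).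
   Context: For $D=\pm d$, $n\equiv a \bmod D$ means $n\equiv a \bmod d$. The exact covering system digraph $G_S=G(Dn+a_1,\dots,Dn+a_d)$ has vertex set $\mathbb{Z}$ and edges $(n,Dn+a_i)$ for all $n\in\mathbb{Z}$ and $1\le i\le d$ (the $a_i$ are considered as specific representatives). Connectedness refers to the underlying undirected graph; cycles are directed cycles, loops included. Every vertex has indegree one, and when $G_S$ is connected it has exactly one directed cycle. Writing a representation as the digit string $b_kb_{k-1}\cdots b_0$, prepending a block $e_1\cdots e_L$ produces the string $e_1\cdots e_Lb_k\cdots b_0$. *)

(* Defs.v *)
From HB Require Import structures.
From mathcomp Require Import all_boot all_order all_algebra.
Set Implicit Arguments. Unset Strict Implicit. Unset Printing Implicit Defensive.
Import Order.TTheory GRing.Theory Num.Theory.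
Local Open Scope ring_scope.

(* Digits a_1..a_d are given as the list [a], with a`_i = a_(i+1). *)

Definition complete_residue_system (d : nat) (a : seq int) : Prop :=
  size a = d /\
  forall n : int, exists! i : 'I_(size a), (n == a`_i %[mod d%:Z])%Z.

Definition rep_value (D : int) (b : seq int) : int :=
  \sum_(j < size b) b`_j * D ^+ j.

(* b is a representation with digits in a: k in N, i.e. b nonempty. *)
Definition is_rep (a : seq int) (b : seq int) : bool :=
  (size b > 0)%N && all (fun x => x \in a) b.

(* Edges of G_S = G(Dn+a_1,...,Dn+a_d): (n, D n + a_i). *)
Definition gedge (D : int) (a : seq int) (n m : int) : bool :=
  (m - D * n) \in a.

Definition weakly_connected (D : int) (a : seq int) : Prop :=
  forall x y : int, exists p : seq int,
    path (fun u v => gedge D a u v || gedge D a v u) x p /\ last x p = y.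

Definition walk_from0 (D : int) (e : seq int) (t : nat) : int :=
  foldl (fun c x => D * c + x) 0 (take t e).

(* e = [e_1;...;e_L] describes a directed cycle 0 = c_0 -> c_1 -> ... -> c_L = 0
   of G_S (loops included): L >= 1, each step is an edge (e_t in a),
   c_L = 0 and c_0, ..., c_(L-1) are pairwise distinct. *)
Definition cycle_through0 (D : int) (a : seq int) (e : seq int) : Prop :=
  [/\ (size e > 0)%N, all (fun x => x \in a) e,
      walk_from0 D e (size e) = 0 &
      uniq [seq walk_from0 D e t | t <- iota 0 (size e)]].

(* Little-endian encoding of "prepending m copies of the block e_1...e_L
   (written most significant digit first)" to b: append m copies of rev e. *)
Definition prepend_blocks (e : seq int) (m : nat) (b : seq int) : seq int :=
  b ++ flatten (nseq m (rev e)).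

(* Main.v *)
Require Import Defs.
From HB Require Import structures.
From mathcomp Require Import all_boot all_order all_algebra.
From mathcomp Require Import zify ring.
Import Order.TTheory GRing.Theory Num.Theory.
Set Implicit Arguments. Unset Strict Implicit.
Local Open Scope ring_scope.

Definition good (D : int) (a : seq int) (dig par : int -> int) :=
  [/\ forall m, dig m \in a, forall m, m = D * par m + dig m &
      forall n n' x x', x \in a -> x' \in a -> D * n + x = D * n' + x' ->
        n = n' /\ x = x'].

Lemma good_step D a dig par : good D a dig par ->
  forall n x, x \in a -> dig (D * n + x) = x /\ par (D * n + x) = n.
Proof.
case=> H1 H2 H3 n x xa.
have := H3 _ _ _ _ (H1 (D * n + x)) xa (esym (H2 (D * n + x))).
by case=> -> ->.
Qed.

Fixpoint digs (dig par : int -> int) (k : nat) (n : int) : seq int :=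
  if k is k'.+1 then dig n :: digs dig par k' (par n) else [::].

Lemma rep_nil D : rep_value D [::] = 0.
Proof. by rewrite /rep_value big_ord0. Qed.

Lemma rep_cons D x b : rep_value D (x :: b) = x + D * rep_value D b.
Proof.
rewrite /rep_value /= big_ord_recl /= expr0 mulr1; congr (_ + _).
rewrite mulr_sumr; apply: eq_bigr => i _.
by rewrite exprS mulrCA.
Qed.

Lemma rep_digs D dig par k n : (forall m, m = D * par m + dig m) ->
  rep_value D (digs dig par k n) + D ^+ k * iter k par n = n.
Proof.
move=> H2; elim: k n => [|k IH] n /=; first by rewrite rep_nil add0r expr0 mul1r.
rewrite rep_cons -iterS iterSr exprS -mulrA -addrA -mulrDr IH.
by rewrite addrC -H2.
Qed.

Lemma size_digs dig par k n : size (digs dig par k n) = k.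
Proof. by elim: k n => //= k IH n; rewrite IH. Qed.

Lemma all_digs (a : seq int) dig par k n : (forall m, dig m \in a) ->
  all (fun x => x \in a) (digs dig par k n).
Proof. by move=> H1; elim: k n => //= k IH n; rewrite H1 IH. Qed.

Lemma nth_digs dig par k n j : (j < k)%N ->
  (digs dig par k n)`_j = dig (iter j par n).
Proof.
elim: k n j => // k IH n [|j] //= ltj.
by rewrite IH // -iterS iterSr.
Qed.

Lemma digs_add dig par s t n :
  digs dig par (s + t) n = digs dig par s n ++ digs dig par t (iter s par n).
Proof. by elim: s n => //= s IH n; rewrite IH -iterS iterSr. Qed.

Lemma rep_is_digs D a dig par b n : good D a dig par ->
  all (fun x => x \in a) b -> rep_value D b = n ->
  b = digs dig par (size b) n /\ iter (size b) par n = 0.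
Proof.
move=> G; elim: b n => [|x b IH] n /=; first by rewrite rep_nil => _ <-.
case/andP=> xa ab; rewrite rep_cons => <-.
have [dx px] := good_step G (rep_value D b) xa.
rewrite addrC dx px -iterS iterSr px.
have [e1 e2] := IH _ ab erefl.
by rewrite -e1 e2.
Qed.

Definition wk (D : int) (e : seq int) t := walk_from0 D e t.

Lemma walk_step D e t : (t < size e)%N ->
  walk_from0 D e t.+1 = D * walk_from0 D e t + e`_t.
Proof. by move=> lt; rewrite /walk_from0 (take_nth 0 lt) foldl_rcons. Qed.

Lemma walk0 D e : walk_from0 D e 0 = 0.
Proof. by rewrite /walk_from0 take0. Qed.

Lemma cyc_par D a dig par e t : good D a dig par -> cycle_through0 D a e ->
  (t < size e)%N ->
  par (walk_from0 D e t.+1) = walk_from0 D e t /\ dig (walk_from0 D e t.+1) = e`_t.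
Proof.
move=> G [_ ae _ _] lt.
have ea : e`_t \in a by apply: (allP ae); rewrite mem_nth.
rewrite walk_step //.
by have [-> ->] := good_step G (walk_from0 D e t) ea.
Qed.

Lemma cyc_iter D a dig par e j : good D a dig par -> cycle_through0 D a e ->
  (j <= size e)%N -> iter j par (walk_from0 D e (size e)) = walk_from0 D e (size e - j).
Proof.
move=> G C; elim: j => [|j IH] lt; first by rewrite subn0.
rewrite iterS IH ?(ltnW lt) //.
have -> : (size e - j = (size e - j.+1).+1)%N by rewrite subnSK.
by case: (cyc_par G C (_ : (size e - j.+1 < size e)%N)) => //; rewrite -subn_gt0 subKn ?(ltnW lt).
Qed.

Lemma cyc_digs D a dig par e j : good D a dig par -> cycle_through0 D a e ->
  (j <= size e)%N -> digs dig par j (walk_from0 D e j) = rev (take j e).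
Proof.
move=> G C; elim: j => [|j IH] lt; first by rewrite take0.
have [p1 d1] := cyc_par G C lt.
by rewrite /= p1 d1 IH ?(ltnW lt) // (take_nth 0 lt) rev_rcons.
Qed.

Lemma cyc_iterL D a dig par e : good D a dig par -> cycle_through0 D a e ->
  iter (size e) par 0 = 0.
Proof.
move=> G C; have := cyc_iter G C (leqnn _).
by case: C => _ _ -> _; rewrite subnn walk0.
Qed.

Lemma cyc_digsL D a dig par e : good D a dig par -> cycle_through0 D a e ->
  digs dig par (size e) 0 = rev e.
Proof.
move=> G C; have := cyc_digs G C (leqnn _).
by case: C => _ _ -> _; rewrite take_size.
Qed.

Lemma cyc_period D a dig par e j : good D a dig par -> cycle_through0 D a e ->
  (0 < j < size e)%N -> iter j par 0 != 0.
Proof.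
move=> G C /andP[j0 jL].
have := cyc_iter G C (ltnW jL).
case: C => _ _ wL u; rewrite wL => ->.
rewrite -[X in _ != X](walk0 D e).
have s : size [seq walk_from0 D e t | t <- iota 0 (size e)] = size e by rewrite size_map size_iota.
have i1 : (size e - j < size [seq walk_from0 D e t | t <- iota 0 (size e)])%N.
  by rewrite s ltn_subrL j0 (leq_ltn_trans _ jL).
have i2 : (0 < size [seq walk_from0 D e t | t <- iota 0 (size e)])%N.
  by rewrite s; apply: leq_ltn_trans jL.
have := nth_uniq 0 i1 i2 u.
rewrite s in i1 i2.
rewrite (nth_map 0%N); last by rewrite size_iota.
rewrite (nth_map 0%N); last by rewrite size_iota.
rewrite !nth_iota // !add0n => ->.
by rewrite subn_eq0 -ltnNge.
Qed.

Lemma cyc_iter_mul D a dig par e q : good D a dig par -> cycle_through0 D a e ->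
  iter (q * size e) par 0 = 0.
Proof.
move=> G C; elim: q => // q IH.
by rewrite mulSn iterD IH (cyc_iterL G C).
Qed.

Lemma cyc_div D a dig par e t : good D a dig par -> cycle_through0 D a e ->
  iter t par 0 = 0 -> exists q, t = (q * size e)%N.
Proof.
move=> G C h; exists (t %/ size e)%N.
have L0 : (0 < size e)%N by case: C.
move: h; rewrite {1}(divn_eq t (size e)) addnC iterD (cyc_iter_mul _ G C).
case r0: (t %% size e)%N => [|r]; first by move=> _; rewrite {1}(divn_eq t (size e)) r0 addn0.
move=> h; have := cyc_period G C (_ : (0 < r.+1 < size e)%N).
by rewrite h eqxx -r0 ltn_mod L0 r0 => /(_ isT).
Qed.

Lemma cyc_digs_mul D a dig par e q : good D a dig par -> cycle_through0 D a e ->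
  digs dig par (q * size e) 0 = flatten (nseq q (rev e)).
Proof.
move=> G C; elim: q => // q IH.
by rewrite mulSn digs_add (cyc_iterL G C) IH (cyc_digsL G C).
Qed.

Lemma uniq_abs D a dig par e b b' : good D a dig par -> cycle_through0 D a e ->
  is_rep a b -> is_rep a b' -> rep_value D b = rep_value D b' ->
  exists m : nat, b' = prepend_blocks e m b \/ b = prepend_blocks e m b'.
Proof.
move=> G C /andP[_ ab] /andP[_ ab'] eb.
have [h1 h2] := rep_is_digs G ab erefl.
have [h1' h2'] := rep_is_digs G ab' (esym eb).
set n := rep_value D b in h1 h2 h1' h2'.
suff key : forall c c', c = digs dig par (size c) n -> iter (size c) par n = 0 ->
  c' = digs dig par (size c') n -> iter (size c') par n = 0 ->
  (size c <= size c')%N -> exists m : nat, c' = prepend_blocks e m c.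
  case: (leqP (size b) (size b')) => hs.
    by have [m hm] := key _ _ h1 h2 h1' h2' hs; exists m; left.
  by have [m hm] := key _ _ h1' h2' h1 h2 (ltnW hs); exists m; right.
move=> c c' e1 e2 e1' e2' le.
rewrite e1' -(subnKC le) digs_add -e1 e2.
have : iter (size c' - size c) par (iter (size c) par n) = 0 by rewrite -iterD subnK.
rewrite e2; case/(cyc_div G C) => q ->.
by exists q; rewrite (cyc_digs_mul _ G C).
Qed.

Definition Rset (par : int -> int) x := exists j, (0 < j)%N /\ iter j par x = 0.

Lemma gedge_par D a dig par u v : good D a dig par -> gedge D a u v -> par v = u.
Proof.
move=> G h; rewrite /gedge in h.
have [_ ] := good_step G u h.
by rewrite addrC subrK.
Qed.

Lemma back_abs D a dig par e : good D a dig par -> cycle_through0 D a e ->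
  weakly_connected D a -> forall n, exists b, is_rep a b /\ rep_value D b = n.
Proof.
move=> G C W.
have R0 : Rset par 0 by exists (size e); split; [case: C | exact: cyc_iterL G C].
have fw : forall x, Rset par x -> Rset par (par x).
  move=> x [[|j] [j0 h]] //; rewrite iterSr in h.
  case: j j0 h => [|j] _ h; first by rewrite /= in h; rewrite h.
  by exists j.+1.
have bw : forall x, Rset par (par x) -> Rset par x.
  by move=> x [j [j0 h]]; exists j.+1; rewrite iterSr.
have all : forall x, Rset par x.
  move=> x; have [p [hp hl]] := W x 0.
  elim: p x hp hl => [|z p IH] x /=; first by move=> _ ->.
  case/andP=> /orP[] hz hp hl; have Rz := IH _ hp hl.
    by rewrite -(gedge_par G hz); apply: fw.
  by apply: bw; rewrite (gedge_par G hz).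
move=> n; have [j [j0 h]] := all n.
exists (digs dig par j n); split.
  by rewrite /is_rep size_digs j0 all_digs //; case: G.
by have := rep_digs j n (let: And3 _ H2 _ := G in H2); rewrite h mulr0 addr0.
Qed.

Definition conn D a (x y : int) := exists p, path (fun u v => gedge D a u v || gedge D a v u) x p /\ last x p = y.

Lemma conn_trans D a x y z : conn D a x y -> conn D a y z -> conn D a x z.
Proof.
move=> [p [hp hl]] [q [hq hl']]; exists (p ++ q).
by rewrite cat_path last_cat hl hp hq.
Qed.

Lemma fwd_abs D a dig par : good D a dig par ->
  (forall n, exists b, is_rep a b /\ rep_value D b = n) ->
  weakly_connected D a /\ exists e, cycle_through0 D a e.
Proof.
move=> G H.
have [H1 H2 H3] := G.
have all : forall x, Rset par x.
  move=> x; have [b [/andP[b0 ab] hb]] := H x.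
  by exists (size b); split => //; case: (rep_is_digs G ab hb).
have ed : forall x, gedge D a (par x) x.
  by move=> x; rewrite /gedge {1}(H2 x) addrC addKr H1.
have c1 : forall x, conn D a x (par x).
  by move=> x; exists [:: par x]; rewrite /= ed orbT.
have c2 : forall x, conn D a (par x) x.
  by move=> x; exists [:: x]; rewrite /= ed.
split.
  move=> x y; have [j [_ hj]] := all x; have [k [_ hk]] := all y.
  have cx : conn D a x (iter j par x).
    elim: (j) => [|i IH]; first by exists [::].
    by apply: conn_trans IH _; rewrite iterS.
  have cy : conn D a (iter k par y) y.
    elim: (k) => [|i IH]; first by exists [::].
    by apply: conn_trans IH; rewrite iterS.
  by apply: conn_trans cx _; rewrite hj -hk.
have ex : exists n, (0 < n)%N && (iter n par 0 == 0).
  by have [j [j0 hj]] := all 0; exists j; rewrite j0 hj eqxx.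
case: (ex_minnP ex) => L /andP[L0 /eqP hL] Lmin.
exists (rev (digs dig par L 0)).
have sz : size (rev (digs dig par L 0)) = L by rewrite size_rev size_digs.
have wk : forall t, (t <= L)%N -> walk_from0 D (rev (digs dig par L 0)) t = iter (L - t) par 0.
  elim=> [|t IH] lt; first by rewrite walk0 subn0 hL.
  rewrite walk_step ?sz // IH ?(ltnW lt) // nth_rev ?size_digs // nth_digs; last first.
    by rewrite ltn_subrL L0.
  by rewrite -(subnSK lt) iterS -H2.
split.
- by rewrite sz.
- by rewrite all_rev all_digs.
- by rewrite sz wk // subnn.
rewrite sz (_ : [seq _ | t <- iota 0 L] = [seq iter (L - t) par 0 | t <- iota 0 L]); last first.
  by apply/eq_in_map => t; rewrite mem_iota add0n => /andP[_ /ltnW] /wk ->.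
rewrite map_inj_in_uniq ?iota_uniq //.
suff key : forall t t', (t < t' < L)%N -> iter (L - t) par 0 != iter (L - t') par 0.
  move=> t t'; rewrite !mem_iota !add0n => /andP[_ tL] /andP[_ t'L] h.
  case: (ltngtP t t') => // c.
    by have := key t t'; rewrite c t'L h eqxx => /(_ isT).
  by have := key t' t; rewrite c tL h eqxx => /(_ isT).
move=> t t' /andP[tt t'L]; apply/negP => /eqP h.
have : iter t par (iter (L - t) par 0) = iter t par (iter (L - t') par 0) by rewrite h.
rewrite -!iterD subnKC ?(ltnW (ltn_trans tt t'L)) // hL => h2.
have := Lmin (t + (L - t'))%N.
rewrite -h2 eqxx andbT; lia.
Qed.

Lemma crs_uniq d a x y : complete_residue_system d a -> x \in a -> y \in a ->
  (x == y %[mod d%:Z])%Z -> x = y.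
Proof.
move=> [_ H] xa ya hxy.
have [i [hi U]] := H x.
have jx : (index x a < size a)%N by rewrite index_mem.
have jy : (index y a < size a)%N by rewrite index_mem.
have ex := U (Ordinal jx); have ey := U (Ordinal jy).
rewrite /= nth_index // in ex; rewrite /= nth_index // in ey.
have e1 := ex (eqxx _ : (x == x %[mod d%:Z])%Z).
have e2 := ey hxy.
have : Ordinal jx = Ordinal jy by rewrite -e1 -e2.
case => /(congr1 (nth 0 a)); rewrite !nth_index //.
Qed.

Definition cdig (d : nat) (a : seq int) (m : int) :=
  nth 0 a (find (fun x => (m == x %[mod d%:Z])%Z) a).

Definition cpar (d : nat) (D : int) (a : seq int) (m : int) :=
  ((m - cdig d a m) %/ D)%Z.

Lemma crs_good d D a : (2 <= d)%N -> (D = d%:Z \/ D = - d%:Z) ->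
  complete_residue_system d a -> good D a (cdig d a) (cpar d D a).
Proof.
move=> d2 hD C.
have hs : forall m, has (fun x => (m == x %[mod d%:Z])%Z) a.
  move=> m; case: C => _ H; have [i [hi _]] := H m.
  by apply/hasP; exists a`_i => //; rewrite mem_nth.
have D0 : D != 0 by case: hD => ->; rewrite ?oppr_eq0 -lt0n ?(leq_trans _ d2) //; lia.
have dvD : forall k, (d%:Z %| k)%Z -> (D %| k)%Z.
  by move=> k; case: hD => -> //; rewrite !dvdzE abszN.
have Dd : (d%:Z %| D)%Z by case: hD => ->; rewrite ?dvdzE ?abszN dvdnn.
split.
- by move=> m; rewrite /cdig mem_nth // -has_find.
- move=> m; rewrite /cpar mulrC divzK; first by rewrite subrK.
  by apply: dvD; rewrite -eqz_mod_dvd; apply: (nth_find 0 (hs m)).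
move=> n n' x x' xa xa' h.
have hx : x = x'.
  apply: (crs_uniq C xa xa'); rewrite eqz_mod_dvd.
  have -> : x - x' = D * (n' - n) 
    by rewrite mulrBr; lia.
  by apply: dvdz_mulr.
split=> //; subst x'.
by apply: (mulfI D0); apply: (addIr x).
Qed.

Theorem mainTheorem9 (d : nat) (D : int) (a : seq int) :
  (2 <= d)%N ->
  (D = d%:Z \/ D = - d%:Z) ->
  complete_residue_system d a ->
  ((forall n : int, exists b : seq int, is_rep a b /\ rep_value D b = n)
     <->
   (weakly_connected D a /\ exists e : seq int, cycle_through0 D a e))
  /\
  ((weakly_connected D a /\ exists e : seq int, cycle_through0 D a e) ->
   forall e : seq int, cycle_through0 D a e ->
   forall b b' : seq int, is_rep a b -> is_rep a b' ->
     rep_value D b = rep_value D b' ->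
     exists m : nat, b' = prepend_blocks e m b \/ b = prepend_blocks e m b').
Proof.
move=> d2 hD C; have G := crs_good d2 hD C.
split; first split.
- exact: fwd_abs G.
- by case=> W [e Ce]; apply: back_abs G Ce W.
move=> _ e Ce b b' hb hb' eb.
exact: uniq_abs G Ce hb hb' eb.
Qed.
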